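(* Let $N$ be a necklace with at least two vertices and with exactly $c$ cycles. Then ${\rm mvr}(N)=|N|-c-1$, where $|N|$ is the number of vertices of $N$.
   Context: All graphs are finite and simple. A necklace is a connected graph in which each vertex belongs to at most one cycle. An orthogonal vector representation of a graph $G=(V,E)$ in $\mathbb{R}^d$ is a map $\phi:V\to\mathbb{R}^d$ with $\phi(v)\neq 0$ for all $v$, and for distinct $u,v$: $\langle\phi(u),\phi(v)\rangle=0$ if and only if $uv\notin E$. ${\rm mvr}(G)$ is the smallest $d$ for which such a representation exists. *)

(* Defs.v *)
From mathcomp Require Import all_boot all_order all_algebra.
From mathcomp Require Import reals.
Set Implicit Arguments. Unset Strict Implicit. Unset Printing Implicit Defensive.
Import GRing.Theory Num.Theory.
Local Open Scope ring_scope.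

Section Graphs.
Variable T : finType.

Definition simple_graph (e : rel T) : Prop := symmetric e /\ irreflexive e.

Definition connected_graph (e : rel T) : Prop := forall x y : T, connect e x y.

Definition is_cycle_seq (e : rel T) (s : seq T) : bool :=
  [&& uniq s, (2 < size s)%N & path.cycle e s].

Definition cycle_edges (s : seq T) : {set {set T}} :=
  [set [set p.1; p.2] | p in zip s (rot 1 s)].

Definition is_cycle (e : rel T) (E : {set {set T}}) : bool :=
  [exists n : 'I_#|T|.+1, [exists t : n.-tuple T,
     is_cycle_seq e t && (E == cycle_edges t)]].

Definition cycles (e : rel T) : {set {set {set T}}} := [set E | is_cycle e E].

Definition cycle_vertices (E : {set {set T}}) : {set T} := \bigcup_(f in E) f.

Definition necklace (e : rel T) : Prop :=
  connected_graph e /\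
  forall (v : T) (E1 E2 : {set {set T}}),
    E1 \in cycles e -> E2 \in cycles e ->
    v \in cycle_vertices E1 -> v \in cycle_vertices E2 -> E1 = E2.

Definition dotv (R : realType) (d : nat) (x y : 'rV[R]_d) : R :=
  \sum_(i < d) x 0 i * y 0 i.

Definition orth_rep (R : realType) (e : rel T) (d : nat)
  (phi : T -> 'rV[R]_d) : Prop :=
  (forall v, phi v != 0) /\
  (forall u v, u != v -> (dotv (phi u) (phi v) == 0) = ~~ e u v).

Definition has_orth_rep (R : realType) (e : rel T) (d : nat) : Prop :=
  exists phi : T -> 'rV[R]_d, orth_rep e phi.

Definition mvr_is (R : realType) (e : rel T) (m : nat) : Prop :=
  has_orth_rep R e m /\ forall d, has_orth_rep R e d -> (m <= d)%N.

End Graphs.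

(* Main.v *)
Require Import Defs.
From mathcomp Require Import all_boot all_order all_algebra.
From mathcomp Require Import reals zify.
Set Implicit Arguments. Unset Strict Implicit. Unset Printing Implicit Defensive.
Import GRing.Theory Num.Theory.

Module Part1.

Section Comb.
Variables (T : finType) (e : rel T).
Hypothesis esy : symmetric e.
Hypothesis eirr : irreflexive e.

Lemma mem_zip1 (s t : seq T) x y : (x, y) \in zip s t -> x \in s /\ y \in t.
Proof.
elim: s t => [|a s IH] [|b t] //=; rewrite inE => /orP[/eqP[-> ->]|/IH[H1 H2]].
  by rewrite !inE !eqxx.
by rewrite !inE H1 H2 !orbT.
Qed.

Lemma zip_first (s t : seq T) v : v \in s -> size s = size t ->
  exists y, (v, y) \in zip s t.
Proof.
elim: s t => [|a s IH] [|b t] //=.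
rewrite inE => /orP[/eqP->|vs] [st]; first by exists b; rewrite inE eqxx.
by have [y Hy] := IH _ vs st; exists y; rewrite inE Hy orbT.
Qed.

Lemma cvP (t : seq T) v : v \in cycle_vertices (cycle_edges t) -> v \in t.
Proof.
case/bigcupP=> f /imsetP[[x y] /mem_zip1 [xt yt] ->]; rewrite !inE /=.
by case/orP=> /eqP->; rewrite // -(mem_rot 1).
Qed.

Lemma cvI (t : seq T) v : v \in t -> v \in cycle_vertices (cycle_edges t).
Proof.
move=> vt; have [y Hy] := zip_first vt (esym (size_rot 1 t)).
apply/bigcupP; exists [set v; y]; last by rewrite !inE eqxx.
by apply/imsetP; exists (v, y).
Qed.

Lemma is_cycleP (E : {set {set T}}) : is_cycle e E -> exists t, is_cycle_seq e t /\ E = cycle_edges t.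
Proof.
by case/existsP=> n /existsP[t /andP[H /eqP->]]; exists t.
Qed.

Lemma cycle_nbrs (t : seq T) v : is_cycle_seq e t -> v \in t ->
  exists a b, [/\ a != b, e v a, e v b, a \in t & b \in t].
Proof.
case/and3P=> ut st ct vt; case: (rot_to vt) => i q rq.
have ct' : path.cycle e (v :: q) by rewrite -rq rot_cycle.
have ut' : uniq (v :: q) by rewrite -rq rot_uniq.
have sq : 2 < size (v :: q) by rewrite -rq size_rot.
have memq x : x \in q -> x \in t by move=> xq; rewrite -(mem_rot i) rq inE xq orbT.
case: q rq ct' ut' sq memq => [|a [|c q1]] //= rq.
rewrite rcons_path => /and4P[eva _ _ ebv] /and4P[_ aq _ _] _ memq.
exists a, (last c q1); split.
- by apply: contraNneq aq => ->; rewrite mem_last.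
- exact: eva.
- by rewrite esy.
- by apply: memq; rewrite inE eqxx.
- by apply: memq; rewrite inE mem_last orbT.
Qed.

End Comb.

End Part1.
Import Part1.

Module Part2.

Definition eS (T : finType) (e : rel T) (S : {set T}) : rel T :=
  fun x y => [&& x \in S, y \in S & e x y].
Definition conn (T : finType) (e : rel T) (S : {set T}) :=
  {in S &, forall x y, connect (eS e S) x y}.
Definition cyc (T : finType) (e : rel T) (S : {set T}) :=
  [set E in cycles e | cycle_vertices E \subset S].

Section Comb2.
Variables (T : finType) (e : rel T).
Hypothesis esy : symmetric e.
Hypothesis eirr : irreflexive e.
Hypothesis neck : forall (v : T) (E1 E2 : {set {set T}}),
    E1 \in cycles e -> E2 \in cycles e ->
    v \in cycle_vertices E1 -> v \in cycle_vertices E2 -> E1 = E2.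

Lemma path_eS_all (S : {set T}) x p : path (eS e S) x p -> all (mem S) p.
Proof.
elim: p x => //= y p IH x /andP[/and3P[_ yS _] H]; rewrite yS /=; exact: IH H.
Qed.

Lemma path_eS_e (S : {set T}) x p : path (eS e S) x p -> path e x p.
Proof. by apply: sub_path => u w /and3P[]. Qed.

Lemma path_eS_sub (S S' : {set T}) x p : path (eS e S) x p -> x \in S' -> all (mem S') p ->
  path (eS e S') x p.
Proof.
elim: p x => //= y p IH x /andP[/and3P[_ _ exy] H] xS /andP[yS ally].
by rewrite /eS xS yS exy /=; apply: IH.
Qed.

Lemma mk_cycle (S : {set T}) v a p : v \in S -> e v a -> a \in S :\ v ->
  path (eS e (S :\ v)) a p -> uniq (a :: p) -> p != [::] -> e v (last a p) ->
  cycle_edges (v :: a :: p) \in cyc e S.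
Proof.
move=> vS eva aS pp up pn evl.
have allp := path_eS_all pp.
have memS' x : x \in a :: p -> x \in S :\ v.
  by rewrite inE => /orP[/eqP->//|xp]; move/allP: allp; apply.
have vn : v \notin a :: p.
  by apply/negP=> /memS'; rewrite !inE eqxx.
have ct : is_cycle_seq e (v :: a :: p).
  apply/and3P; split.
  - by rewrite /= vn; exact: up.
  - by case: p pn {pp up evl allp memS' vn}.
  - rewrite /= rcons_path eva (path_eS_e pp) /=; by rewrite esy.
have sz : size (v :: a :: p) < #|T|.+1.
  rewrite ltnS; case/and3P: ct => ut _ _.
  by rewrite -(card_uniqP ut) max_card.
rewrite inE; apply/andP; split.
  rewrite inE; apply/existsP; exists (Ordinal sz); apply/existsP.
  by exists (in_tuple (v :: a :: p)); rewrite ct eqxx.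
apply/subsetP=> x /cvP; rewrite inE => /orP[/eqP->//|/memS'].
by rewrite inE => /andP[].
Qed.

Lemma leaf_nocyc (S : {set T}) v w : v \in S -> (forall u, u \in S -> e v u -> u = w) ->
  forall E, E \in cyc e S -> v \notin cycle_vertices E.
Proof.
move=> vS leaf E; rewrite !inE => /andP[cE sE]; apply/negP => vE.
have [t [ct Et]] := is_cycleP cE.
have vt : v \in t by apply: cvP; rewrite -Et.
have [a [b [ab eva evb at_ bt]]] := cycle_nbrs esy ct vt.
have inS x : x \in t -> x \in S.
  by move=> xt; apply: (subsetP sE); rewrite Et; apply: cvI.
move: ab; rewrite (leaf a (inS _ at_) eva) (leaf b (inS _ bt) evb).
by rewrite eqxx.
Qed.

Lemma cyc_sub (S S' : {set T}) : S' \subset S -> cyc e S' \subset cyc e S.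
Proof.
move=> sS; apply/subsetP=> E; rewrite !inE => /andP[-> sE] /=.
exact: subset_trans sE sS.
Qed.

Lemma cyc_leaf (S : {set T}) v w : v \in S -> (forall u, u \in S -> e v u -> u = w) ->
  cyc e (S :\ v) = cyc e S.
Proof.
move=> vS leaf; apply/eqP; rewrite eqEsubset cyc_sub ?subsetDl //=.
apply/subsetP=> E EC; have := leaf_nocyc vS leaf EC.
move: EC; rewrite !inE => /andP[-> sE] /= vE.
apply/subsetP=> x xE; rewrite !inE (subsetP sE _ xE) andbT.
by apply: contraNneq vE => <-.
Qed.

Lemma cyc_del (S : {set T}) v E0 : E0 \in cyc e S -> v \in cycle_vertices E0 ->
  cyc e (S :\ v) = cyc e S :\ E0.
Proof.
move=> E0S vE0; apply/setP=> E; rewrite !inE.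
case cE: (is_cycle e E) => /=; last by rewrite andbF.
have cE' : E \in cycles e by rewrite inE.
have cE0 : E0 \in cycles e by move: E0S; rewrite !inE => /andP[].
apply/idP/idP.
  move=> sE; apply/andP; split.
    apply/negP=> /eqP EE0; move: sE; rewrite EE0 => /subsetP /(_ v vE0).
    by rewrite !inE eqxx.
  by apply: subset_trans sE (subsetDl _ _).
case/andP=> EE0 sE; apply/subsetP=> x xE; rewrite !inE (subsetP sE _ xE) andbT.
apply/negP=> /eqP xv; move: EE0; rewrite (neck cE' cE0 (_ : v \in _) vE0) ?eqxx //.
by rewrite -xv.
Qed.

Lemma zip_last (a : T) p q1 v : v \notin a :: p ->
  (q1, v) \in zip (a :: p) (rcons p v) -> q1 = last a p.
Proof.
elim: p a => [|y p IH] a /=.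
  by move=> _; rewrite inE => /eqP[->].
rewrite !inE !negb_or => /and3P[va vy vp] /orP[/eqP[_ vy']|H].
  by rewrite vy' eqxx in vy.
by apply: IH => //; rewrite inE negb_or vy.
Qed.

Lemma nbr_in_cycle (S : {set T}) v a p x : v \in S -> a \in S :\ v ->
  path (eS e (S :\ v)) a p -> v \notin a :: p -> x != v ->
  [set v; x] \in cycle_edges (v :: a :: p) -> x = a \/ x = last a p.
Proof.
move=> vS aS pp vn xv /imsetP[[q1 q2]]; rewrite rot1_cons /= inE.
case/orP=> [/eqP[-> ->] E|H E].
  left; have : x \in [set v; a] by rewrite -E !inE eqxx orbT.
  by rewrite !inE (negbTE xv) => /eqP.
have [q1p _] := mem_zip1 H.
have : v \in [set q1; q2] by rewrite -E !inE eqxx.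
rewrite !inE /= => /orP[/eqP vq1|/eqP vq2].
  by move: q1p; rewrite -vq1 (negbTE vn).
rewrite -vq2 in H E.
right; rewrite -(zip_last vn H).
have : x \in [set q1; v] by rewrite -E !inE eqxx orbT.
by rewrite !inE (negbTE xv) orbF => /eqP.
Qed.

End Comb2.

End Part2.
Import Part2.

Module Part3.

Section NonCut.
Variables (T : finType) (e : rel T).
Hypothesis esy : symmetric e.

Lemma eS_sym (S : {set T}) : symmetric (eS e S).
Proof. by move=> x y; rewrite /eS esy andbCA. Qed.

Lemma noncut (S : {set T}) : conn e S -> 1 < #|S| ->
  exists2 v, v \in S & conn e (S :\ v).
Proof.
move=> cS /card_gt1P [r [r2 [rS r2S rr2]]].
pose N := #|T|.
pose Pb n u := [exists q : n.-tuple T, path (eS e S) r q && (last r q == u)].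
pose dist u := find (fun n => Pb n u) (iota 0 N).
have distP u q : path (eS e S) r q -> last r q = u -> size q < N ->
    dist u <= size q /\ Pb (dist u) u /\ dist u < N.
  move=> pq lq sq.
  have Pq : Pb (size q) u.
    by apply/existsP; exists (in_tuple q); rewrite /= pq lq eqxx.
  have hs : has (fun n => Pb n u) (iota 0 N).
    by apply/hasP; exists (size q); rewrite // mem_iota.
  have fl : dist u < N by move: hs; rewrite has_find size_iota.
  have Pd : Pb (dist u) u.
    by have := nth_find 0 hs; rewrite nth_iota // add0n.
  split=> //; rewrite leqNgt; apply/negP => lt.
  by have := before_find 0 lt; rewrite nth_iota // add0n Pq.
have exq u : u \in S -> exists q, [/\ path (eS e S) r q, last r q = u & size q < N].
  move=> uS; case/connectP: (cS r u rS uS) => q pq ->.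
  case: (shortenP pq) => q' pq' uq' _; exists q'; split=> //.
  by have := card_uniqP uq'; rewrite /= => <-; rewrite max_card.
have geoq u : u \in S -> exists q, [/\ path (eS e S) r q, last r q = u & size q = dist u].
  move=> uS; have [q [pq lq sq]] := exq u uS.
  have [_ [/existsP [q' /andP [pq' /eqP lq']] _]] := distP u q pq lq sq.
  by exists q'; rewrite size_tuple.
have dist_lt u : u \in S -> dist u < N.
  by move=> uS; have [q [pq lq sq]] := exq u uS; have [_ []] := distP u q pq lq sq.
have dist_step w y : w \in S -> y \in S -> e w y -> dist y <= (dist w).+1.
  move=> wS yS ewy; have [q [pq lq sq]] := geoq w wS.
  have pq2 : path (eS e S) r (rcons q y) by rewrite rcons_path pq lq /eS wS yS ewy.
  case: (ltnP (dist w).+1 N) => [lt|ge]; last first.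
    by apply: leq_trans ge; apply: ltnW; apply: dist_lt.
  have sz : size (rcons q y) < N by rewrite size_rcons sq.
  have [H _] := distP y (rcons q y) pq2 (last_rcons _ _ _) sz.
  by move: H; rewrite size_rcons sq.
have geo : forall q, path (eS e S) r q -> size q = dist (last r q) ->
    forall x, x \in belast r q -> dist x < size q.
  elim/last_ind => [//|q y IH]; rewrite rcons_path last_rcons belast_rcons size_rcons.
  move=> /andP[pq /and3P[lS yS ely]] sq x.
  have lt : size q < N.
    by have := dist_lt y yS; rewrite -sq => /ltnW.
  have [d1 _] := distP _ q pq erefl lt.
  have := dist_step _ _ lS yS ely; rewrite -sq ltnS => d2.
  have eq1 : size q = dist (last r q) by apply/eqP; rewrite eqn_leq d1 d2.
  rewrite lastI mem_rcons inE => /orP[/eqP->|xb]; first by rewrite -eq1.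
  by apply: ltnW; rewrite ltnS IH.
case: (arg_maxnP dist rS) => v vS vmax.
have d0 : dist r = 0.
  have [d _] := distP r [::] erefl erefl (leq_ltn_trans (leq0n _) (dist_lt r rS)).
  by move: d; case: (dist r).
have rv : r != v.
  apply: contraNneq rr2 => rv.
  have : dist r2 <= dist v := vmax r2 r2S.
  rewrite -rv d0 leqn0 => /eqP d2.
  have [q [pq lq sq]] := geoq r2 r2S.
  by move: lq; rewrite d2 in sq; case: q sq {pq} => // _ /= ->.
have cr u : u \in S :\ v -> connect (eS e (S :\ v)) r u.
  rewrite !inE => /andP[uv uS]; have [q [pq lq sq]] := geoq u uS.
  apply/connectP; exists q => //.
  have allin : all (mem (S :\ v)) (r :: q).
    apply/allP=> x; rewrite lastI lq mem_rcons inE => /orP[/eqP->|xb].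
      by rewrite !inE uv uS.
    have := geo q pq; rewrite lq => /(_ sq x xb); rewrite sq => dx.
    have xS : x \in S.
      move: xb => /mem_belast; rewrite inE => /orP[/eqP->//|xq].
      by move/allP: (path_eS_all pq) => /(_ x xq).
    rewrite !inE xS andbT; apply: contraTneq dx => ->.
    by rewrite -leqNgt; apply: (vmax u uS).
  by move: allin => /= /andP[rin qin]; apply: path_eS_sub pq rin qin.
exists v => // x y xS yS.
have csym := sym_connect_sym (eS_sym (S :\ v)).
by apply: (connect_trans (y := r)); [rewrite csym|]; apply: cr.
Qed.

End NonCut.

End Part3.
Import Part3.

Module Part4.
Local Open Scope ring_scope.

Definition sumS (R : realType) (T : finType) d (phi : T -> 'rV[R]_d) (S : {set T}) :=
  (\sum_(u in S) <<phi u>>)%MS.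

Section LA.
Variable R : realType.

Lemma dotvC d (x y : 'rV[R]_d) : dotv x y = dotv y x.
Proof. by apply: eq_bigr => i _; rewrite mulrC. Qed.

Lemma dotvDl d (x y z : 'rV[R]_d) : dotv (x + y) z = dotv x z + dotv y z.
Proof. by rewrite /dotv -big_split; apply: eq_bigr => i _; rewrite mxE mulrDl. Qed.

Lemma dotvZl d a (x y : 'rV[R]_d) : dotv (a *: x) y = a * dotv x y.
Proof. by rewrite /dotv mulr_sumr; apply: eq_bigr => i _; rewrite mxE mulrA. Qed.

Lemma dotvNl d (x y : 'rV[R]_d) : dotv (- x) y = - dotv x y.
Proof. by rewrite -scaleN1r dotvZl mulN1r. Qed.

Lemma dotv0l d (y : 'rV[R]_d) : dotv 0 y = 0.
Proof. by rewrite /dotv big1 // => i _; rewrite mxE mul0r. Qed.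

Lemma dotv_row d (x y : 'rV[R]_d) (a b : R) :
  dotv (row_mx x a%:M) (row_mx y b%:M) = dotv x y + a * b.
Proof.
rewrite /dotv big_split_ord /= big_ord1; congr (_ + _).
  by apply: eq_bigr => i _; rewrite !row_mxEl.
by rewrite !row_mxEr !mxE /= !mulr1n.
Qed.

Lemma dotv_eq0 d (x : 'rV[R]_d) : (dotv x x == 0) = (x == 0).
Proof.
apply/idP/idP; last by move/eqP->; rewrite dotv0l.
move=> /eqP H; apply/eqP/rowP => i; rewrite mxE.
have ge : forall j : 'I_d, true -> 0 <= x 0 j * x 0 j by move=> j _; exact: mulr_ge0_le0 || exact: sqr_ge0.
have := @psumr_eq0P R _ xpredT (fun j => x 0 j * x 0 j) ge H i isT.
by move/eqP; rewrite mulf_eq0 orbb => /eqP.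
Qed.

Lemma dotv_mx d (x y : 'rV[R]_d) : dotv x y = (x *m y^T) 0 0.
Proof. by rewrite !mxE; apply: eq_bigr => i _; rewrite !mxE. Qed.

Lemma orth_sum (T : finType) d (phi : T -> 'rV[R]_d) (S : {set T}) x :
  (forall u, u \in S -> dotv (phi u) x = 0) ->
  forall y, (y <= sumS phi S)%MS -> dotv y x = 0.
Proof.
move=> H y yS.
have sK : (sumS phi S <= kermx x^T)%MS.
  apply/sumsmx_subP => u uS; rewrite genmxE; apply/sub_kermxP.
  by apply/rowP => i; rewrite ord1 -dotv_mx H // mxE.
have /sub_kermxP := submx_trans yS sK.
by rewrite dotv_mx => ->; rewrite mxE.
Qed.

Lemma sumS_sup (T : finType) d (phi : T -> 'rV[R]_d) (S : {set T}) u :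
  u \in S -> (phi u <= sumS phi S)%MS.
Proof. by move=> uS; apply: (sumsmx_sup u) => //; rewrite genmxE. Qed.

End LA.

End Part4.
Import Part4.

Module Part5.

Definition repS (R : realType) (T : finType) (e : rel T) d (phi : T -> 'rV[R]_d)
  (S : {set T}) :=
  (forall u, u \in S -> phi u != 0%R) /\
  (forall u w, u \in S -> w \in S -> u != w -> (dotv (phi u) (phi w) == 0%R) = ~~ e u w).

Lemma ar1 (r1 r2 c n : nat) : r2 <= r1 -> n - c - 1 <= r2 -> n.+1 - c.+1 - 1 <= r1.
Proof. lia. Qed.
Lemma ar2 (r1 r2 c n : nat) : r2 < r1 -> n - c - 1 <= r2 -> n.+1 - c - 1 <= r1.
Proof. lia. Qed.
Lemma ar0 (r c : nat) : 0 < r -> 2 - c - 1 <= r.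
Proof. lia. Qed.

Section Lower.
Variables (R : realType) (T : finType) (e : rel T).
Hypothesis esy : symmetric e.
Hypothesis eirr : irreflexive e.
Hypothesis neck : forall (v : T) (E1 E2 : {set {set T}}),
    E1 \in cycles e -> E2 \in cycles e ->
    v \in cycle_vertices E1 -> v \in cycle_vertices E2 -> E1 = E2.

Lemma conn_nbr (S : {set T}) x : conn e S -> x \in S -> 1 < #|S| ->
  exists2 y, y \in S & e x y.
Proof.
move=> cS xS /card_gt1P [a [b [aS bS ab]]].
have [u uS ux] : exists2 u, u \in S & u != x.
  by case: (eqVneq a x) => [ax|]; [exists b => //; rewrite -ax eq_sym|exists a].
case/connectP: (cS x u xS uS) => [[|y p]] /=; first by move=> _ ux'; rewrite ux' eqxx in ux.
by case/andP=> /and3P[_ yS exy] _ _; exists y.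
Qed.

Lemma sumS_mono d (phi : T -> 'rV[R]_d) (S S' : {set T}) : S' \subset S ->
  (sumS phi S' <= sumS phi S)%MS.
Proof.
move=> sS; apply/sumsmx_subP => u uS; rewrite genmxE.
by apply: sumS_sup; apply: (subsetP sS).
Qed.

Lemma lower n : forall (S : {set T}) d (phi : T -> 'rV[R]_d), #|S| <= n ->
  conn e S -> 1 < #|S| -> repS e phi S ->
  #|S| - #|cyc e S| - 1 <= \rank (sumS phi S).
Proof.
elim: n => [|n IH] S d phi; first by rewrite leqn0 => /eqP->.
move=> Sn cS S1 [nz orth].
have [u0 u0S] : exists u, u \in S by move/card_gt1P: S1 => [a [_ [aS _ _]]]; exists a.
have rk1 : 0 < \rank (sumS phi S).
  rewrite lt0n; apply: contraTneq (nz u0 u0S) => /eqP; rewrite mxrank_eq0.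
  move/eqP=> s0; have := sumS_sup phi u0S; rewrite s0 submx0 => ->; by [].
case: (eqVneq #|S| 2) => [S2|S2]; first by rewrite S2; apply: ar0.
have S3 : 2 < #|S| by rewrite ltn_neqAle eq_sym S2 S1.
have [v vS cS'] := noncut esy cS S1.
set S' := S :\ v.
have cardS : #|S| = #|S'|.+1 by rewrite (cardsD1 v S) vS.
have S'1 : 1 < #|S'| by rewrite -ltnS -cardS.
have S'n : #|S'| <= n by rewrite -ltnS -cardS.
have S'S : S' \subset S by apply: subsetDl.
have [w wS evw] := conn_nbr cS vS S1.
have wS' : w \in S' by rewrite !inE wS andbT; apply: contraTneq evw => ->; rewrite eirr.
case: (boolP [exists u, [&& u \in S, e v u & u != w]]) => [/existsP[b /and3P[bS evb bw]]|noex].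
  have bS' : b \in S' by rewrite !inE bS andbT; apply: contraTneq evb => ->; rewrite eirr.
  case/connectP: (cS' w b wS' bS') => p0 pp0 lp0.
  case: (shortenP pp0) lp0 => p pp up _ lp.
  have pn : p != [::] by apply: contraNneq bw => p0'; rewrite lp p0'.
  have evl : e v (last w p) by rewrite -lp.
  have CS := mk_cycle esy vS evw wS' pp up pn evl.
  have vC : v \in cycle_vertices (cycle_edges (v :: w :: p)) by apply: cvI; rewrite inE eqxx.
  have ccard : #|cyc e S| = #|cyc e S'|.+1.
    by rewrite (cyc_del neck CS vC) (cardsD1 (cycle_edges (v :: w :: p)) (cyc e S)) CS.
  have rep' : repS e phi S'.
    split; [by move=> u uS; apply: nz; apply: (subsetP S'S)|].
    by move=> u1 u2 u1S u2S; apply: orth; apply: (subsetP S'S).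
  have := IH S' d phi S'n cS' S'1 rep'.
  have := mxrankS (sumS_mono phi S'S).
  rewrite cardS ccard; exact: ar1.
have leaf : forall u, u \in S -> e v u -> u = w.
  move=> u uS evu; apply/eqP; apply: contraNT noex => uw.
  by apply/existsP; exists u; rewrite uS evu uw.
have ccard : cyc e S' = cyc e S by apply: (cyc_leaf esy vS leaf).
have ortv u : u \in S' -> u != w -> dotv (phi u) (phi v) = 0%R.
  rewrite !inE => /andP[uv uS] uw; apply/eqP; rewrite orth //.
  by apply: contra uw => euv; apply/eqP; apply: leaf; rewrite // esy.
have vv : dotv (phi v) (phi v) != 0%R by rewrite dotv_eq0 nz.
pose lam := (dotv (phi w) (phi v) / dotv (phi v) (phi v))%R.
pose phi' u := if u == w then (phi w + (- lam) *: phi v)%R else phi u.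
have dotw u : dotv (phi' w) (phi u) = (dotv (phi w) (phi u) - lam * dotv (phi v) (phi u))%R.
  by rewrite /phi' eqxx dotvDl dotvZl mulNr.
have ortw : dotv (phi' w) (phi v) = 0%R.
  by rewrite dotw /lam mulfVK // subrr.
have ort' u : u \in S' -> dotv (phi' u) (phi v) = 0%R.
  move=> uS; case: (eqVneq u w) => [->|uw]; first exact: ortw.
  by rewrite /phi' (negbTE uw); apply: ortv.
have dotw2 u : u \in S' -> u != w -> dotv (phi' w) (phi u) = dotv (phi w) (phi u).
  by move=> uS uw; rewrite dotw (dotvC (phi v)) ortv // mulr0 subr0.
have rep' : repS e phi' S'.
  split.
    move=> u uS; case: (eqVneq u w) => [->|uw]; last first.
      by rewrite /phi' (negbTE uw); apply: nz; apply: (subsetP S'S).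
    have [y yS ewy] := conn_nbr cS' wS' S'1.
    have yw : y != w by apply: contraTneq ewy => ->; rewrite eirr.
    apply/eqP => H.
    have : dotv (phi' w) (phi y) = 0%R by rewrite H dotv0l.
    rewrite dotw2 // => /eqP; rewrite orth ?ewy //; last by rewrite eq_sym.
    by apply: (subsetP S'S).
  move=> u1 u2 u1S u2S u12.
  have u1S0 := subsetP S'S _ u1S; have u2S0 := subsetP S'S _ u2S.
  have p'ne u : u != w -> phi' u = phi u by move=> uw; rewrite /phi' (negbTE uw).
  case: (eqVneq u1 w) => [e1|n1]; case: (eqVneq u2 w) => [e2|n2].
  - by rewrite e1 e2 eqxx in u12.
  - rewrite (p'ne _ n2) e1 dotw2 //; rewrite e1 in u12 u1S0; exact: orth.
  - rewrite (p'ne _ n1) e2 dotvC dotw2 // dotvC; rewrite e2 in u12 u2S0; exact: orth.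
  - by rewrite (p'ne _ n1) (p'ne _ n2); apply: orth.
have IHr := IH S' d phi' S'n cS' S'1 rep'.
set A := sumS phi' S'.
have AS : (A + phi v <= sumS phi S)%MS.
  rewrite addsmx_sub sumS_sup // andbT; apply/sumsmx_subP => u uS; rewrite genmxE.
  rewrite /phi'; case: (u == w).
    by rewrite addmx_sub ?scalemx_sub ?sumS_sup.
  by apply: sumS_sup; apply: (subsetP S'S).
have lt : (A < A + phi v)%MS.
  rewrite ltmxE addsmxSl /=; apply/negP => H.
  have vA : (phi v <= A)%MS := submx_trans (addsmxSr _ _) H.
  have := orth_sum ort' vA; apply/eqP; exact: vv.
have := mxrankS AS; move: lt; rewrite ltmxErank => /andP[_ lt].
move: IHr; rewrite ccard cardS => IHr H; exact: ar2 (leq_trans lt H) IHr.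
Qed.

End Lower.

End Part5.
Import Part5.

Module Part6.

Section Ind.
Variables (T : finType) (e : rel T).
Hypothesis esy : symmetric e.
Hypothesis eirr : irreflexive e.
Hypothesis neck : forall (v : T) (E1 E2 : {set {set T}}),
    E1 \in cycles e -> E2 \in cycles e ->
    v \in cycle_vertices E1 -> v \in cycle_vertices E2 -> E1 = E2.

Lemma uniq_path_conn (S : {set T}) x y : connect (eS e S) x y -> x != y ->
  exists p, [/\ path (eS e S) x p, uniq (x :: p), p != [::] & last x p = y].
Proof.
case/connectP=> p0 pp0 lp0 xy.
case: (shortenP pp0) lp0 => p pp up _ lp; exists p; split => //.
by apply: contraNneq xy => p0'; rewrite lp p0'.
Qed.

Lemma neck_ind (P : {set T} -> Prop) :
  (forall S : {set T}, #|S| = 2 -> conn e S -> P S) ->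
  (forall (S : {set T}) v w, conn e S -> v \in S -> conn e (S :\ v) -> w \in S :\ v -> e v w ->
     (forall u, u \in S -> e v u -> u = w) -> 1 < #|S :\ v| -> P (S :\ v) -> P S) ->
  (forall (S : {set T}) v a p, conn e S -> v \in S -> conn e (S :\ v) -> e v a -> a \in S :\ v ->
     path (eS e (S :\ v)) a p -> uniq (a :: p) -> p != [::] -> e v (last a p) ->
     (forall u, u \in S -> e v u -> u = a \/ u = last a p) ->
     1 < #|S :\ v| -> P (S :\ v) -> P S) ->
  forall S : {set T}, conn e S -> 1 < #|S| -> P S.
Proof.
move=> Hb Hl Hc S; move: {2}#|S| (leqnn #|S|) => n; elim: n S => [|n IH] S.
  by rewrite leqn0 => /eqP->.
move=> Sn cS S1.
case: (eqVneq #|S| 2) => [S2|S2]; first exact: Hb.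
have S3 : 2 < #|S| by rewrite ltn_neqAle eq_sym S2 S1.
have [v vS cS'] := noncut esy cS S1.
set S' := S :\ v.
have cardS : #|S| = #|S'|.+1 by rewrite (cardsD1 v S) vS.
have S'1 : 1 < #|S'| by rewrite -ltnS -cardS.
have S'n : #|S'| <= n by rewrite -ltnS -cardS.
have IHS' := IH S' S'n cS' S'1.
have [w wS evw] := conn_nbr cS vS S1.
have inS' u : u \in S -> e v u -> u \in S'.
  by move=> uS evu; rewrite !inE uS andbT; apply: contraTneq evu => ->; rewrite eirr.
have wS' := inS' w wS evw.
case: (boolP [exists u, [&& u \in S, e v u & u != w]]) => [/existsP[b /and3P[bS evb bw]]|noex]; last first.
  apply: (Hl S v w) => // u uS evu; apply/eqP; apply: contraNT noex => uw.
  by apply/existsP; exists u; rewrite uS evu uw.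
have bS' := inS' b bS evb.
have wb : w != b by rewrite eq_sym.
have [p [pp up pn lp]] := uniq_path_conn (cS' w b wS' bS') wb.
have evl : e v (last w p) by rewrite lp.
apply: (Hc S v w p) => // x xS evx.
case: (eqVneq x w) => [->|xw]; [by left|right].
have xS' := inS' x xS evx.
have [q [pq uq qn lq]] := uniq_path_conn (cS' x w xS' wS') xw.
have evl2 : e v (last x q) by rewrite lq.
have C1 := mk_cycle esy vS evw wS' pp up pn evl.
have C2 := mk_cycle esy vS evx xS' pq uq qn evl2.
have v1 : v \in cycle_vertices (cycle_edges (v :: w :: p)) by apply: cvI; rewrite inE eqxx.
have v2 : v \in cycle_vertices (cycle_edges (v :: x :: q)) by apply: cvI; rewrite inE eqxx.
have cyc_in (E : {set {set T}}) : E \in cyc e S -> E \in cycles e by rewrite inE => /andP[].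
have E12 := neck (cyc_in _ C2) (cyc_in _ C1) v2 v1.
have vx : [set v; x] \in cycle_edges (v :: x :: q).
  by apply/imsetP; exists (v, x) => //; rewrite rot1_cons /= inE eqxx.
rewrite E12 in vx.
have vn : v \notin w :: p.
  apply/negP => /= H; have : all (mem S') (w :: p) by rewrite /= wS' (path_eS_all pp).
  by move/allP/(_ v H); rewrite !inE eqxx.
have xv : x != v by apply: contraTneq evx => ->; rewrite eirr.
by case: (nbr_in_cycle vS wS' pp vn xv vx) => // xw'; rewrite xw' eqxx in xw.
Qed.

Lemma no_three (a b x y z : T) : x \in [set a; b] -> y \in [set a; b] -> z \in [set a; b] ->
  x != y -> y != z -> x != z -> False.
Proof.
by rewrite !inE => /orP[]/eqP-> /orP[]/eqP-> /orP[]/eqP->; rewrite ?eqxx.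
Qed.

Lemma cyc2 (S : {set T}) : #|S| = 2 -> cyc e S = set0.
Proof.
move=> /eqP /cards2P [a [b [ab SE]]].
apply/setP => E; rewrite inE; apply/negP; rewrite !inE => /andP[cE sE].
have [t [ct Et]] := is_cycleP cE.
have [x xt] : exists x, x \in t.
  by case: t ct {Et} => [|x t] //; exists x; rewrite inE eqxx.
have [y [z [yz exy exz yt zt]]] := cycle_nbrs esy ct xt.
have inS u : u \in t -> u \in [set a; b].
  by move=> ut; rewrite -SE; apply: (subsetP sE); rewrite Et; apply: cvI.
apply: (no_three (inS _ xt) (inS _ yt) (inS _ zt)) => //.
  by apply: contraTneq exy => ->; rewrite eirr.
by apply: contraTneq exz => ->; rewrite eirr.
Qed.

Lemma cbound (S : {set T}) : conn e S -> 1 < #|S| -> #|cyc e S| + 2 <= #|S|.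
Proof.
move: S; apply: (neck_ind (P := fun S => #|cyc e S| + 2 <= #|S|)).
- by move=> S S2 _; rewrite cyc2 // cards0 S2.
- move=> S v w _ vS _ _ _ leaf _ IH.
  by rewrite -(cyc_leaf esy vS leaf) (cardsD1 v S) vS add1n; apply: leq_trans IH _.
- move=> S v a p _ vS _ eva aS pp up pn evl _ _ IH.
  have CS := mk_cycle esy vS eva aS pp up pn evl.
  have vC : v \in cycle_vertices (cycle_edges (v :: a :: p)) by apply: cvI; rewrite inE eqxx.
  rewrite (cardsD1 (cycle_edges (v :: a :: p)) (cyc e S)) CS -(cyc_del neck CS vC).
  by rewrite (cardsD1 v S) vS add1n addSn.
Qed.

End Ind.

End Part6.
Import Part6.

Module Part7.

Definition CV (T : finType) (e : rel T) (S : {set T}) :=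
  \bigcup_(E in cyc e S) cycle_vertices E.
Definition valid (T : finType) (e : rel T) (S : {set T}) (s : seq T) :=
  if s is a :: s1 then
    [&& uniq s, s1 != [::], all (mem S) s, path e a s1 & all (fun u => u \notin CV e S) s]
  else false.
Definition ends (T : finType) (s : seq T) : seq T :=
  if s is a :: s1 then [:: a; last a s1] else [::].
Definition Inv (R : realType) (T : finType) (e : rel T) (S : {set T}) d :=
  exists phi : T -> 'rV[R]_d, repS e phi S /\
  exists X : seq T -> 'rV[R]_d,
    (forall s, valid e S s -> forall u, u \in S ->
       (dotv (X s) (phi u) == 0%R) = (u \notin ends s)) /\
    (forall s1 s2, valid e S s1 -> valid e S s2 -> (forall u, u \in s1 -> u \notin s2) ->
       dotv (X s1) (X s2) = 0%R).

Lemma ends_sub (T : finType) (s : seq T) : {subset ends s <= s}.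
Proof.
case: s => [|a s1] //= x; rewrite !inE => /orP[/eqP->|/eqP->]; first by rewrite eqxx.
by rewrite -in_cons mem_last.
Qed.

Lemma allS (T : finType) (S : {set T}) (s : seq T) x : all (mem S) s -> x \in s -> x \in S.
Proof. by move=> /allP H /H. Qed.

Local Open Scope ring_scope.

Lemma dotv0r (R : realType) d (x : 'rV[R]_d) : dotv x 0 = 0.
Proof. by rewrite dotvC dotv0l. Qed.

Lemma one1_neq0 (R : realType) : (1%:M : 'M[R]_1) != 0.
Proof.
apply/eqP => /matrixP /(_ 0 0); rewrite !mxE /= => /eqP; by rewrite oner_eq0.
Qed.

Section Leaf.
Variables (R : realType) (T : finType) (e : rel T).
Hypothesis esy : symmetric e.
Hypothesis eirr : irreflexive e.
Variables (S : {set T}) (v w : T) (d : nat) (phi' : T -> 'rV[R]_d) (X' : seq T -> 'rV[R]_d).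
Hypothesis vS : v \in S.
Hypothesis wS' : w \in S :\ v.
Hypothesis evw : e v w.
Hypothesis leaf : forall u, u \in S -> e v u -> u = w.
Hypothesis rep' : repS e phi' (S :\ v).
Hypothesis X1 : forall s, valid e (S :\ v) s -> forall u, u \in S :\ v ->
       (dotv (X' s) (phi' u) == 0) = (u \notin ends s).
Hypothesis X2 : forall s1 s2, valid e (S :\ v) s1 -> valid e (S :\ v) s2 ->
   (forall u, u \in s1 -> u \notin s2) -> dotv (X' s1) (X' s2) = 0.
Hypothesis cycE : cyc e (S :\ v) = cyc e S.

Definition ph u : 'rV[R]_(d + 1) :=
  if u == v then row_mx 0 1%:M else row_mx (phi' u) ((u == w)%:R%:M).

Lemma wv : w != v. Proof. by move: wS'; rewrite !inE => /andP[]. Qed.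

Lemma inS' u : u \in S -> u != v -> u \in S :\ v.
Proof. by move=> uS uv; rewrite !inE uS uv. Qed.

Lemma dph u1 u2 : u1 != v -> u2 != v ->
  dotv (ph u1) (ph u2) = dotv (phi' u1) (phi' u2) + (u1 == w)%:R * (u2 == w)%:R.
Proof. by move=> n1 n2; rewrite /ph (negbTE n1) (negbTE n2) dotv_row. Qed.

Lemma dphv u : u != v -> dotv (ph v) (ph u) = (u == w)%:R.
Proof. by move=> n; rewrite /ph eqxx (negbTE n) dotv_row dotv0l add0r mul1r. Qed.

Lemma ev_iff u : u \in S -> u != v -> e v u = (u == w).
Proof.
move=> uS uv; apply/idP/eqP => [evu|->//]; exact: leaf.
Qed.

Lemma rep_leaf : repS e ph S.
Proof.
have [nz' orth'] := rep'.
split.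
  move=> u uS; rewrite /ph; case: ifP => [_|/negbT uv].
    by rewrite row_mx_eq0 negb_and one1_neq0 orbT.
  by rewrite row_mx_eq0 negb_and nz' // inS'.
move=> u1 u2 u1S u2S u12.
case: (eqVneq u1 v) => [e1|n1]; case: (eqVneq u2 v) => [e2|n2].
- by rewrite e1 e2 eqxx in u12.
- rewrite e1 dphv // ev_iff //; by case: (u2 == w); rewrite ?oner_eq0 ?eqxx.
- rewrite dotvC e2 dphv // esy ev_iff //; by case: (u1 == w); rewrite ?oner_eq0 ?eqxx.
- rewrite dph //.
  case: (eqVneq u1 w) => [w1|w1]; case: (eqVneq u2 w) => [w2|w2];
    rewrite ?mulr0 ?mul0r ?addr0 ?orth' ?inS' //.
  by rewrite w1 w2 eqxx in u12.
Qed.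

Definition F (q : seq T) : 'rV[R]_(d + 1) :=
  if behead q == [::] then row_mx 0 1%:M else row_mx (X' q) ((- dotv (X' q) (phi' w))%:M).
Definition Xl (s : seq T) : 'rV[R]_(d + 1) :=
  if s is a :: s1 then
    (if a == v then F s1 else if last a s1 == v then F (belast a s1)
     else row_mx (X' s) (0 : R)%:M)
  else 0.

Lemma CVE : CV e (S :\ v) = CV e S. Proof. by rewrite /CV cycE. Qed.

Lemma valid_S' s : valid e S s -> v \notin s -> valid e (S :\ v) s.
Proof.
case: s => [|a s1] //; rewrite /valid CVE => /and5P[u sn alls ps allc] vn.
apply/and5P; split => //; apply/allP => x xs.
have xS := allP alls x xs; rewrite /= in xS.
by rewrite inE inS' //; apply: contraNneq vn => <-.
Qed.

Lemma Fform q : valid e (S :\ v) q ->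
  F q = row_mx (X' q) ((- dotv (X' q) (phi' w))%:M).
Proof. by case: q => [|a [|b q]]. Qed.

Lemma FL0 u : u \in S -> (dotv (row_mx 0 1%:M) (ph u) == 0) = (u \notin [:: v; w]).
Proof.
move=> uS; rewrite /ph !inE; case: (eqVneq u v) => [->|uv].
  by rewrite dotv_row dotv0l add0r mulr1 oner_eq0.
rewrite dotv_row dotv0l add0r mul1r /=.
by case: (u == w); rewrite ?oner_eq0 ?eqxx.
Qed.

Lemma FL q z : valid e (S :\ v) q -> ends q =i [:: w; z] -> z != w ->
  forall u, u \in S -> (dotv (F q) (ph u) == 0) = (u \notin [:: v; z]).
Proof.
move=> vq eq zw u uS; rewrite Fform //.
have zS' : z \in S :\ v.
  have : z \in q by apply: ends_sub; rewrite eq !inE eqxx orbT.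
  by case: q vq {eq} => [|a q] // /and5P[_ _ al _ _] zq; exact: (allP al z zq).
have zv : z != v by move: zS'; rewrite !inE => /andP[].
set t := dotv (X' q) (phi' w).
have t0 : t != 0 by rewrite /t X1 // eq !inE eqxx.
rewrite /ph !inE; case: (eqVneq u v) => [->|uv].
  by rewrite dotv_row dotv0r add0r mulr1 oppr_eq0 (negbTE t0).
rewrite dotv_row /=; case: (eqVneq u w) => [->|uw].
  by rewrite mulr1 /t subrr eqxx eq_sym (negbTE zw).
rewrite mulr0 addr0 X1 ?inS' // eq !inE (negbTE uw).
by [].
Qed.

Lemma mid_absurd a s1 : uniq (a :: s1) -> path e a s1 -> all (mem S) (a :: s1) ->
  v \in s1 -> last a s1 != v -> False.
Proof.
move=> us ps als vs; case/splitPr: s1 / vs us ps als => p1 [|y p3].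
  by rewrite last_cat /= eqxx.
move=> us ps als _; move: ps; rewrite cat_path /= => /and3P[_ elv /andP[evy _]].
have inS x : x \in a :: p1 ++ [:: v, y & p3] -> x \in S by move=> xs; have := allP als x xs.
have l1 : last a p1 = w.
  apply: leaf; last by rewrite esy.
  by apply: inS; rewrite -cat_cons mem_cat mem_last.
have l2 : y = w.
  by apply: leaf => //; apply: inS; rewrite -cat_cons mem_cat !inE eqxx !orbT.
move: us; rewrite -cat_cons cat_uniq => /and3P[_ /hasPn H _].
by have := H y; rewrite !inE eqxx orbT => /(_ isT); rewrite -in_cons l2 -l1 mem_last.
Qed.

Lemma Xnov s : valid e S s -> v \notin s -> Xl s = row_mx (X' s) (0 : R)%:M.
Proof.
case: s => [|a s1] // _; rewrite inE negb_or => /andP[va vs].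
rewrite /= eq_sym (negbTE va); case: ifP => // /eqP lv.
by move: (mem_last a s1); rewrite lv inE (negbTE vs) (negbTE va).
Qed.

Lemma Xshape s : valid e S s -> v \in s ->
  (Xl s = row_mx 0 1%:M /\ ends s =i [:: v; w]) \/
  exists q z, [/\ Xl s = F q, valid e (S :\ v) q, {subset q <= s},
     ends q =i [:: w; z] & z != w /\ ends s =i [:: v; z]].
Proof.
case: s => [|a s1] // vld; have := vld; move=> /and5P[us sn als ps alc].
rewrite [ends _]/= [Xl _]/=.
case: (eqVneq a v) => [av|av] vin.
  subst a; case: s1 sn us als ps alc vld {vin} => [|y s2] // _ us als ps alc vld.
  move: ps => /= /andP[evy ps2].
  have yw : y = w by apply: leaf => //; apply: (allS als); rewrite !inE eqxx orbT.
  subst y.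
  case: s2 us als ps2 alc vld => [|y s3] us als ps2 alc vld.
    by left; split=> // x.
  right; exists (w :: y :: s3), (last y s3); split => //.
  - apply: valid_S'.
      move: us als alc => /= /andP[_ ->] /andP[_ ->] /andP[_ ->].
      by move: ps2 => /= ->.
    by move: us; rewrite cons_uniq => /andP[].
  - by move=> x xs; rewrite inE xs orbT.
  - move: us; rewrite /= !inE !negb_or => /and3P[_ /andP[wy ws3] _].
    split; last by [].
    apply: contraNneq wy => H; move: (mem_last y s3); rewrite -H inE.
    by rewrite H (negbTE ws3) orbF.

case: (eqVneq (last a s1) v) => [lv|lv]; last first.
  exfalso; apply: (mid_absurd us ps als) => //.
  by move: vin; rewrite inE eq_sym (negbTE av).
case/lastP: s1 sn us als ps alc vld lv {vin} => [|s1' y] // _ us als ps alc vld.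
rewrite last_rcons => yv; subst y; rewrite belast_rcons.
move: ps; rewrite rcons_path => /andP[ps1 elv].
have lw : last a s1' = w.
  apply: leaf; last by rewrite esy.
  by apply: (allS als); rewrite -rcons_cons mem_rcons inE mem_last orbT.
have us' : uniq (a :: s1') by move: us; rewrite -rcons_cons rcons_uniq => /andP[].
have vn' : v \notin a :: s1' by move: us; rewrite -rcons_cons rcons_uniq => /andP[].
case: s1' us' vn' ps1 lw als alc vld us {elv} => [|y s3] us' vn' ps1 lw als alc vld us.
  by left; split=> // x; move: lw => /= ->; rewrite !inE orbC.
right; exists (a :: y :: s3), a; split => //.
- apply: valid_S' => //.
  apply/and5P; split => //.
    by move: als; rewrite -rcons_cons all_rcons => /andP[_ ->].
  by move: alc; rewrite -rcons_cons all_rcons => /andP[_ ->].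
- by move=> x xs; rewrite -rcons_cons mem_rcons inE xs orbT.
- by move=> x; move: lw => /= ->; rewrite !inE orbC.
- split; last by move=> x; rewrite !inE orbC.
  move: lw => /= <-; apply: contraTneq (mem_last y s3) => <-.
  by move: us'; rewrite cons_uniq => /andP[].
Qed.

Lemma X1_leaf s : valid e S s -> forall u, u \in S ->
  (dotv (Xl s) (ph u) == 0) = (u \notin ends s).
Proof.
move=> vs u uS; case: (boolP (v \in s)) => vin; last first.
  rewrite Xnov // /ph; case: (eqVneq u v) => [->|uv].
    rewrite dotv_row dotv0r mul0r addr0 eqxx; apply/esym.
    by apply: contra vin; apply: ends_sub.
  by rewrite dotv_row mul0r addr0 X1 ?inS' //; apply: valid_S'.
case: (Xshape vs vin) => [[-> E]|[q [z [-> vq _ Eq [zw E]]]]].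
  by rewrite FL0 // E.
by rewrite (FL vq Eq zw uS) E.
Qed.

Lemma X2_half s1 s2 : valid e S s1 -> valid e S s2 -> v \notin s1 ->
  (forall u, u \in s1 -> u \notin s2) -> dotv (Xl s1) (Xl s2) = 0.
Proof.
move=> v1 v2 n1 dis; rewrite (Xnov v1 n1).
case: (boolP (v \in s2)) => n2.
  case: (Xshape v2 n2) => [[-> _]|[q [z [-> vq sq _ _]]]].
    by rewrite dotv_row dotv0r mul0r addr0.
  rewrite Fform // dotv_row mul0r addr0; apply: X2 => //; first exact: valid_S'.
  by move=> u /dis; apply: contra; apply: sq.
by rewrite Xnov // dotv_row mul0r addr0; apply: X2 => //; apply: valid_S'.
Qed.

Lemma X2_leaf s1 s2 : valid e S s1 -> valid e S s2 ->
  (forall u, u \in s1 -> u \notin s2) -> dotv (Xl s1) (Xl s2) = 0.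
Proof.
move=> v1 v2 dis; case: (boolP (v \in s1)) => n1; last exact: X2_half.
have n2 : v \notin s2 by apply: dis.
rewrite dotvC; apply: X2_half => // u us2; apply: contraL us2; apply: dis.
Qed.

Lemma inv_leaf : Inv R e S (d + 1).
Proof.
exists ph; split; first exact: rep_leaf.
by exists Xl; split; [exact: X1_leaf | exact: X2_leaf].
Qed.

End Leaf.

End Part7.
Import Part7.

Module Part8.

Lemma valid_sub (T : finType) (e : rel T) (S S' : {set T}) s :
  valid e S s -> all (mem S') s -> CV e S' \subset CV e S -> valid e S' s.
Proof.
case: s => [|a s1] // /and5P[u sn _ ps alc] al sub.
apply/and5P; split => //; apply/allP => x xs.
by apply: contra (allP alc x xs); apply: (subsetP sub).
Qed.

Lemma CV_sub (T : finType) (e : rel T) (S S' : {set T}) :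
  S' \subset S -> CV e S' \subset CV e S.
Proof.
move=> sS; apply/subsetP => x /bigcupP [E ES xE]; apply/bigcupP; exists E => //.
exact: (subsetP (cyc_sub e sS)).
Qed.

Local Open Scope ring_scope.

Section Cyc.
Variables (R : realType) (T : finType) (e : rel T).
Hypothesis esy : symmetric e.
Hypothesis eirr : irreflexive e.
Hypothesis neck : forall (v : T) (E1 E2 : {set {set T}}),
    E1 \in cycles e -> E2 \in cycles e ->
    v \in cycle_vertices E1 -> v \in cycle_vertices E2 -> E1 = E2.
Variables (S : {set T}) (v a : T) (p : seq T) (d : nat).
Variables (phi' : T -> 'rV[R]_d) (X' : seq T -> 'rV[R]_d).
Hypothesis vS : v \in S.
Hypothesis eva : e v a.
Hypothesis aS' : a \in S :\ v.
Hypothesis pp : path (eS e (S :\ v)) a p.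
Hypothesis up : uniq (a :: p).
Hypothesis pn : p != [::].
Hypothesis evl : e v (last a p).
Hypothesis nbrs : forall u, u \in S -> e v u -> u = a \/ u = last a p.
Hypothesis rep' : repS e phi' (S :\ v).
Hypothesis X1 : forall s, valid e (S :\ v) s -> forall u, u \in S :\ v ->
       (dotv (X' s) (phi' u) == 0) = (u \notin ends s).
Hypothesis X2 : forall s1 s2, valid e (S :\ v) s1 -> valid e (S :\ v) s2 ->
   (forall u, u \in s1 -> u \notin s2) -> dotv (X' s1) (X' s2) = 0.

Definition phc u := if u == v then X' (a :: p) else phi' u.

Lemma CS : cycle_edges (v :: a :: p) \in cyc e S.
Proof. exact: (mk_cycle esy vS eva aS' pp up pn evl). Qed.

Lemma allP' : all (mem (S :\ v)) (a :: p).
Proof. by rewrite /= aS' (path_eS_all pp). Qed.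

Lemma vP : v \notin a :: p.
Proof. by apply/negP => /(allS allP'); rewrite !inE eqxx. Qed.

Lemma inCV x : x \in v :: a :: p -> x \in CV e S.
Proof. by move=> xs; apply/bigcupP; exists (cycle_edges (v :: a :: p)); [exact: CS| apply: cvI]. Qed.

Lemma validP : valid e (S :\ v) (a :: p).
Proof.
apply/and5P; split => //; first exact: allP'; first exact: path_eS_e pp.
apply/allP => x xs; apply/negP => /bigcupP [E ES xE].
have cE : E \in cycles e by move: ES; rewrite inE => /andP[].
have cC : cycle_edges (v :: a :: p) \in cycles e by move: CS; rewrite inE => /andP[].
have xC : x \in cycle_vertices (cycle_edges (v :: a :: p)).
  by apply: cvI; rewrite inE xs orbT.
have EC := neck cE cC xE xC.
have vE : v \in cycle_vertices E by rewrite EC; apply: cvI; rewrite inE eqxx.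
by move: ES; rewrite inE => /andP[_ /subsetP /(_ v vE)]; rewrite !inE eqxx.
Qed.

Lemma ev_iff2 u : u \in S -> u != v -> e v u = (u \in ends (a :: p)).
Proof.
move=> uS uv; rewrite /= !inE; apply/idP/idP.
  by case/(nbrs uS) => ->; rewrite eqxx ?orbT.
by case/orP => /eqP->.
Qed.

Lemma rep_cyc : repS e phc S.
Proof.
have [nz' orth'] := rep'.
split.
  move=> u uS; rewrite /phc; case: ifP => [_|/negbT uv]; last by apply: nz'; rewrite !inE uv.
  apply/eqP => H; have := X1 validP aS'; rewrite H dotv0l eqxx /= !inE eqxx.
  by [].
move=> u1 u2 u1S u2S u12; rewrite /phc.
case: (eqVneq u1 v) => [e1|n1]; case: (eqVneq u2 v) => [e2|n2].
- by rewrite e1 e2 eqxx in u12.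
- have u2S' : u2 \in S :\ v by rewrite !inE n2.
  by rewrite e1 (X1 validP u2S') ev_iff2.
- have u1S' : u1 \in S :\ v by rewrite !inE n1.
  by rewrite e2 dotvC (X1 validP u1S') (esy u1 v) ev_iff2.
- by apply: orth' => //; rewrite !inE ?n1 ?n2.
Qed.

Lemma validS_S' s : valid e S s -> valid e (S :\ v) s /\ (forall x, x \in s -> x \notin v :: a :: p).
Proof.
move=> vs.
have nc : forall x, x \in s -> x \notin v :: a :: p.
  move=> x xs; apply: contra _ (_ : x \notin CV e S); first exact: inCV.
  by case: s vs xs => [|b s1] // /and5P[_ _ _ _ /allP al] /al.
split=> //; apply: (valid_sub vs _ (CV_sub e (subsetDl S [set v]))).
apply/allP => x xs; have := nc x xs; rewrite !inE negb_or => /andP[xv _].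
rewrite xv /=.
by case: s vs xs {nc} => [|b s1] // /and5P[_ _ /allP al _ _] /al.
Qed.

Lemma inv_cyc : Inv R e S d.
Proof.
exists phc; split; first exact: rep_cyc.
exists X'; split; last first.
  move=> s1 s2 /validS_S' [v1 _] /validS_S' [v2 _]; exact: X2.
move=> s vs u uS; have [vs' nc] := validS_S' vs.
rewrite /phc; case: (eqVneq u v) => [->|uv]; last by apply: X1; rewrite // !inE uv.
rewrite X2 ?validP // ?eqxx.
  apply/esym/negP => /ends_sub /nc; by rewrite inE eqxx.
by move=> x /nc; rewrite inE negb_or => /andP[].
Qed.

End Cyc.

End Part8.
Import Part8.

Module Part9.

Lemma ar3 (n c : nat) : c + 2 <= n -> n.+1 - c - 1 = n - c - 1 + 1.
Proof. lia. Qed.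

Section Upper.
Variables (R : realType) (T : finType) (e : rel T).
Hypothesis esy : symmetric e.
Hypothesis eirr : irreflexive e.
Hypothesis neck : forall (v : T) (E1 E2 : {set {set T}}),
    E1 \in cycles e -> E2 \in cycles e ->
    v \in cycle_vertices E1 -> v \in cycle_vertices E2 -> E1 = E2.

Lemma valid_ends (S : {set T}) s : valid e S s ->
  exists x y, [/\ x != y, x \in S, y \in S, ends s = [:: x; y] & x \in s].
Proof.
case: s => [|x s1] // /and5P[us sn als _ _].
exists x, (last x s1); split => //.
- case: s1 sn us {als} => [|y s2] // _; rewrite cons_uniq => /andP[xn _].
  by apply: contraNneq xn => ->; rewrite /= mem_last.
- by apply: (allS als); rewrite inE eqxx.
- by apply: (allS als); rewrite mem_last.
- by rewrite inE eqxx.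
Qed.

Lemma inv_base (S : {set T}) : #|S| = 2 -> conn e S -> Inv R e S 1.
Proof.
move=> S2 cS; have := S2; move/eqP/cards2P => [a [b [ab SE]]].
have S1 : 1 < #|S| by rewrite S2.
have eab : e a b.
  have aS : a \in S by rewrite SE !inE eqxx.
  have [y yS eay] := conn_nbr cS aS S1.
  move: yS; rewrite SE !inE => /orP[/eqP ya|/eqP yb]; last by rewrite -yb.
  by move: eay; rewrite ya eirr.
pose one : 'rV[R]_1 := const_mx (1%R : R).
have d1 : dotv one one = 1%R by rewrite /dotv big_ord1 !mxE mulr1.
have one0 : one != 0%R.
  by apply/eqP => /rowP /(_ ord0); rewrite !mxE => /eqP; rewrite oner_eq0.
exists (fun _ => one); split.
  split=> // u w; rewrite SE !inE d1 oner_eq0 => /orP[]/eqP-> /orP[]/eqP->;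
    rewrite ?eqxx // => _; by rewrite ?eab // esy eab.
exists (fun _ => one); split.
  move=> s vs u uS; rewrite d1 oner_eq0; case: (boolP (u \in ends s)) => // un; exfalso.
  have [x [y [xy xS yS es xs]]] := valid_ends vs.
  move: un; rewrite es !inE negb_or => /andP[ux uy].
  by apply: (no_three (a:=a) (b:=b) (x:=u) (y:=x) (z:=y)); rewrite -?SE // eq_sym.
move=> s1 s2 v1 v2 dis; exfalso.
have [x [y [xy xS yS es xs]]] := valid_ends v1.
have [z [_ [_ zS _ _ zs]]] := valid_ends v2.
have xz : x != z by apply: contraTneq zs => <-; exact: dis.
have yz : y != z.
  apply: contraTneq zs => <-; apply: dis; apply: ends_sub; rewrite es !inE eqxx orbT.
  by [].
by apply: (no_three (a:=a) (b:=b) (x:=x) (y:=y) (z:=z)); rewrite -?SE.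
Qed.

Lemma upper (S : {set T}) : conn e S -> 1 < #|S| ->
  Inv R e S (#|S| - #|cyc e S| - 1).
Proof.
move: S; apply: (neck_ind esy eirr neck (P := fun S => Inv R e S (#|S| - #|cyc e S| - 1))).
- by move=> S S2 cS; rewrite cyc2 // cards0 S2; apply: inv_base.
- move=> S v w cS vS cS' wS' evw leaf S'1 [phi' [rep' [X' [X1 X2]]]].
  have cE := cyc_leaf esy vS leaf.
  have cb := cbound esy eirr neck cS' S'1.
  rewrite (cardsD1 v S) vS add1n -cE ar3 //.
  exact: (inv_leaf esy wS' evw leaf rep' X1 X2 cE).
- move=> S v a p cS vS cS' eva aS' pp up pn evl nbrs S'1 [phi' [rep' [X' [X1 X2]]]].
  have CS := mk_cycle esy vS eva aS' pp up pn evl.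
  have vC : v \in cycle_vertices (cycle_edges (v :: a :: p)) by apply: cvI; rewrite inE eqxx.
  rewrite (cardsD1 (cycle_edges (v :: a :: p)) (cyc e S)) CS -(cyc_del neck CS vC).
  rewrite (cardsD1 v S) vS !add1n subSS.
  exact: (inv_cyc esy neck vS eva aS' pp up pn evl nbrs rep' X1 X2).
Qed.

End Upper.


End Part9.
Import Part9.

Theorem proposition5p4 (R : realType) (T : finType) (e : rel T) (c : nat) :
  simple_graph e -> necklace e -> (2 <= #|T|)%N -> #|cycles e| = c ->
  mvr_is R e (#|T| - c - 1)%N.
Proof.
move=> [esy eirr] [cG neckH] T2 Hc.
have eST : eS e setT =2 e by move=> x y; rewrite /eS !inE.
have cT : conn e setT by move=> x y _ _; rewrite (eq_connect eST); apply: cG.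
have cycT : cyc e setT = cycles e by apply/setP => E; rewrite !inE subsetT andbT.
have T1 : 1 < #|[set: T]| by rewrite cardsT.
split.
  have [phi [[nz orth] _]] := upper R esy eirr neckH cT T1.
  move: phi nz orth; rewrite cardsT cycT Hc => phi nz orth.
  exists phi; split=> [v|u v uv]; [exact: nz | exact: orth].
move=> d [phi [nz orth]].
have rep : repS e phi setT by split=> [u _|u v _ _ uv]; [exact: nz|exact: orth].
have := lower esy eirr neckH (leqnn _) cT T1 rep.
rewrite cardsT cycT Hc => H; apply: leq_trans H _; exact: rank_leq_col.
Qed.
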